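(* Let $\Sigma_1$ and $\Sigma_2$ be trees with $n$ vertices each containing exactly one marked vertex. If $\Sigma_1^*\cong\Sigma_2^*$, then $\Sigma_1\cong\Sigma_2$ (as trees with a marked vertex).
   Context: For a tree $\Sigma$ with exactly one marked vertex $m$, the dual graph $\Sigma^*$ is constructed as follows: its vertices are the edges of $\Sigma$, two joined by a simple edge iff the edges of $\Sigma$ share an endpoint; in addition there is one extra vertex $v$ (standing for the marked vertex), joined by a 2-fold edge to each vertex of $\Sigma^*$ corresponding to an edge of $\Sigma$ incident to $m$. Isomorphisms of dual graphs preserve edge multiplicities. *)

(* Defs.v *)
From mathcomp Require Import all_boot.
Set Implicit Arguments. Unset Strict Implicit. Unset Printing Implicit Defensive.

Definition is_tree (T : finType) (e : rel T) : Prop :=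
  [/\ symmetric e, irreflexive e,
      (forall x y : T, connect e x y) &
      (forall c : seq T, uniq c -> 2 < size c -> ~~ cycle e c)].

Definition is_edge (T : finType) (e : rel T) (A : {set T}) : bool :=
  [exists x, exists y, e x y && (A == [set x; y])].

Definition edge_of (T : finType) (e : rel T) := {A : {set T} | is_edge e A}.

(* Vertices of the dual graph Sigma^*: [Some a] for an edge a of Sigma,
   [None] for the extra vertex v standing for the marked vertex. *)
Definition dual_vertex (T : finType) (e : rel T) := option (edge_of e).

Definition dual_mult (T : finType) (e : rel T) (m : T)
    (a b : dual_vertex e) : nat :=
  match a, b with
  | Some x, Some y =>
      if (x != y) && [exists v, (v \in val x) && (v \in val y)] then 1 else 0
  | None, Some y | Some y, None => if m \in val y then 2 else 0
  | None, None => 0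
  end.
Arguments dual_mult {T} e m a b.

Definition dual_iso (T1 T2 : finType) (e1 : rel T1) (m1 : T1)
    (e2 : rel T2) (m2 : T2) : Prop :=
  exists f : dual_vertex e1 -> dual_vertex e2,
    bijective f /\ forall a b, dual_mult e2 m2 (f a) (f b) = dual_mult e1 m1 a b.

Definition marked_iso (T1 T2 : finType) (e1 : rel T1) (m1 : T1)
    (e2 : rel T2) (m2 : T2) : Prop :=
  exists g : T1 -> T2,
    [/\ bijective g, (forall x y, e2 (g x) (g y) = e1 x y) & g m1 = m2].

(* Main.v *)
Require Import Defs.
From mathcomp Require Import all_boot.
From mathcomp Require Import zify.
Set Implicit Arguments. Unset Strict Implicit. Unset Printing Implicit Defensive.


Fixpoint layer (V : finType) (mu : V -> V -> nat) (r : V) k (a : V) : bool :=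
  match k with
  | 0 => a == r
  | k'.+1 => layer mu r k' a || [exists b, layer mu r k' b && (mu b a != 0)]
  end.

Lemma layer_iso (V1 V2 : finType) (mu1 : V1 -> V1 -> nat) (mu2 : V2 -> V2 -> nat)
  r1 r2 (f : V1 -> V2) : bijective f -> (forall a b, mu2 (f a) (f b) = mu1 a b) ->
  f r1 = r2 -> forall k a, layer mu2 r2 k (f a) = layer mu1 r1 k a.
Proof.
move=> fb fmu fr; have fi := bij_inj fb; case: fb => g fK gK.
elim=> [|k IH] a /=; first by rewrite -fr (inj_eq fi).
rewrite IH; congr orb; apply/existsP/existsP => [[b2 hb]|[b hb]].
  by exists (g b2); move: hb; rewrite -{1 2}(gK b2) IH fmu.
by exists (f b); rewrite IH fmu.
Qed.

Definition isolatedP (T : finType) (e : rel T) (E : edge_of e) :=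
  forall F : edge_of e, F != E -> ~~ [exists w, (w \in val E) && (w \in val F)].

Lemma le_all_eq a b : (forall k, (a <= k) = (b <= k)) -> a = b.
Proof. by move=> H; apply/eqP; rewrite eqn_leq -H leqnn H leqnn. Qed.

Section Tree.
Variables (T : finType) (e : rel T) (m : T).
Hypotheses (eS : symmetric e) (eirr : irreflexive e)
  (econn : forall x y : T, connect e x y)
  (eacyc : forall c : seq T, uniq c -> 2 < size c -> ~~ cycle e c).

Fixpoint inR k (y : T) : bool :=
  match k with
  | 0 => y == m
  | k'.+1 => inR k' y || [exists x, inR k' x && e x y]
  end.

Lemma inR_S k y : inR k y -> inR k.+1 y.
Proof. by move=> h /=; rewrite h. Qed.

Lemma inR_mono k k' y : k <= k' -> inR k y -> inR k' y.
Proof.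
move=> /subnK <-; elim: (k' - k) => [|i IH] //= h.
by rewrite IH.
Qed.

Lemma inR_path p x k : path e x p -> inR k x -> inR (k + size p) (last x p).
Proof.
elim: p x k => [|y p IH] x k /=; first by rewrite addn0.
move=> /andP [exy hp] hx; rewrite addnS -addSn; apply: IH => //=.
by apply/orP; right; apply/existsP; exists x; rewrite hx.
Qed.

Lemma reach y : exists k, inR k y.
Proof.
have /connectP [p hp ->] := econn m y.
by exists (0 + size p); apply: inR_path => //=.
Qed.

Definition dist y := ex_minn (reach y).

Lemma inR_dist y : inR (dist y) y.
Proof. by rewrite /dist; case: ex_minnP. Qed.

Lemma dist_min k y : inR k y -> dist y <= k.
Proof. by rewrite /dist; case: ex_minnP => d _ H /H. Qed.

Lemma inR_iff k y : inR k y = (dist y <= k).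
Proof.
apply/idP/idP; first exact: dist_min.
by move=> h; apply: inR_mono h (inR_dist y).
Qed.

Lemma dist_m : dist m = 0.
Proof. by apply/eqP; rewrite -leqn0 -inR_iff /=. Qed.

Lemma dist0 y : (dist y == 0) = (y == m).
Proof. by rewrite -leqn0 -inR_iff. Qed.

Lemma dist_e x y : e x y -> dist y <= (dist x).+1.
Proof.
move=> exy; rewrite -inR_iff /=; apply/orP; right.
by apply/existsP; exists x; rewrite exy inR_dist.
Qed.

Lemma dist_pred y : 0 < dist y -> exists x, e x y && (dist x + 1 == dist y).
Proof.
case Hd: (dist y) => [|d] // _.
have := inR_dist y; rewrite Hd /= => /orP [|/existsP [x /andP [hx exy]]].
  by move/dist_min; rewrite Hd ltnn.
exists x; rewrite exy /=; move/dist_min: hx => h1.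
have := dist_e exy; rewrite Hd => h2; apply/eqP; lia.
Qed.

Definition par y := odflt m [pick x | e x y && (dist x + 1 == dist y)].

Lemma par_spec y : y != m -> e (par y) y /\ dist (par y) + 1 = dist y.
Proof.
move=> ym; rewrite /par; case: pickP => [x /andP [h1 /eqP h2] | H] //=.
have : 0 < dist y by rewrite lt0n dist0.
by case/dist_pred => x; rewrite H.
Qed.

Lemma par_m : par m = m.
Proof.
rewrite /par; case: pickP => [x /andP [h1 /eqP h2] | H] //=.
move: h2; rewrite dist_m addn1 //.
Qed.

Lemma dist_par y : dist (par y) = dist y - 1.
Proof.
case: (eqVneq y m) => [->|ym]; first by rewrite par_m dist_m.
by have [_ h] := par_spec ym; lia.
Qed.

Lemma e_par y : y != m -> e y (par y).
Proof. by move=> /par_spec [h _]; rewrite eS. Qed.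

Lemma e_par' y : y != m -> e (par y) y.
Proof. by move=> /par_spec []. Qed.

Lemma dist_pos y : (0 < dist y) = (y != m).
Proof. by rewrite lt0n dist0. Qed.

Definition anc i y := iter i par y.

Lemma dist_anc i y : dist (anc i y) = dist y - i.
Proof. elim: i => [|i IH] /=; first by rewrite subn0. rewrite dist_par IH; lia. Qed.

Lemma anc_dist y : anc (dist y) y = m.
Proof. by apply/eqP; rewrite -dist0 dist_anc subnn. Qed.

Lemma path_fwd k a v : a + k <= dist v ->
  path e (anc a v) [seq anc i v | i <- iota a.+1 k].
Proof.
elim: k a => [|k IH] a //= h; apply/andP; split; last by apply: IH; lia.
rewrite e_par // -dist_pos dist_anc; lia.
Qed.

Lemma last_fwd k a v : last (anc a v) [seq anc i v | i <- iota a.+1 k] = anc (a + k) v.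
Proof. elim: k a => [|k IH] a; first by rewrite addn0. by rewrite -addSnnS -(IH a.+1). Qed.

Lemma path_rev k v : k <= dist v -> path e (anc k v) (rev [seq anc i v | i <- iota 0 k]).
Proof.
elim: k => [|k IH] // h.
rewrite -addn1 iotaD map_cat rev_cat /= add0n.
rewrite addn1 /= e_par' ?IH //; first exact: ltnW.
by rewrite -dist_pos dist_anc; lia.
Qed.

Lemma nocyc x y s : x != y -> dist x = dist y -> all (fun z => dist x < dist z) s ->
  uniq s -> path e y (rcons s x) -> False.
Proof.
move=> xy dxy alls us pth.
have [d dxd] : {d | dist x = d} by exists (dist x).
have ex : exists i, anc i x == anc i y.
  by exists (dist x); rewrite {2}dxy !anc_dist.
case: (ex_minnP ex) => j /eqP jP jmin.
have jd : j <= d by rewrite -dxd; apply: jmin; rewrite {2}dxy !anc_dist.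
have j0 : 0 < j.
  by case: j jP {jmin jd} => //= h; rewrite h eqxx in xy.
have dax i : dist (anc i x) = d - i by rewrite dist_anc dxd.
have day i : dist (anc i y) = d - i by rewrite dist_anc -dxy dxd.
set A := [seq anc i x | i <- iota 0 j.+1].
set B := [seq anc i y | i <- iota 0 j].
have memA z : z \in A -> exists2 i, i <= j & z = anc i x.
  by case/mapP => i; rewrite mem_iota add0n ltnS => /andP [_ hi] ->; exists i.
have memB z : z \in B -> exists2 i, i < j & z = anc i y.
  by case/mapP => i; rewrite mem_iota add0n => /andP [_ hi] ->; exists i.
have hs z : z \in s -> d < dist z by move=> zs; move/allP: alls => /(_ z zs); rewrite dxd.
apply: (negP (eacyc (c := A ++ rev B ++ s) _ _)).
- rewrite !cat_uniq rev_uniq us andbT.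
  apply/and4P; split.
  + rewrite map_inj_in_uniq ?iota_uniq // => i1 i2.
    rewrite !mem_iota !add0n !ltnS => /andP [_ h1] /andP [_ h2] /(congr1 dist).
    rewrite !dax; lia.
  + rewrite has_cat negb_or; apply/andP; split.
      apply/hasPn => z; rewrite mem_rev => /memB [i hi ->].
      apply/negP => /memA [i' hi' E].
      have := congr1 dist E; rewrite dax day => h; have ii : i = i' by lia.
      subst i'; move: (jmin i); rewrite E eqxx => /(_ isT); lia.
    apply/hasPn => z /hs hz; apply/negP => /memA [i' _ E].
    by move: hz; rewrite E dax; lia.
  + rewrite map_inj_in_uniq ?iota_uniq // => i1 i2.
    rewrite !mem_iota !add0n => /andP [_ h1] /andP [_ h2] /(congr1 dist).
    rewrite !day; lia.
  + apply/hasPn => z /hs hz; apply/negP; rewrite mem_rev => /memB [i' _ E].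
    by move: hz; rewrite E day; lia.
- rewrite !size_cat size_rev !size_map !size_iota; lia.
- rewrite /A /= rcons_cat cat_path rcons_cat cat_path.
  rewrite (@path_fwd j 0 x) ?add0n; last by rewrite dxd.
  rewrite (_ : last x _ = anc j x); last exact: (last_fwd j 0 x).
  rewrite jP path_rev /=; last by rewrite -dxy dxd.
  rewrite /B; case: j j0 {jmin jd jP A memA B memB} => [|j] //= _.
  by rewrite rev_cons last_rcons pth.
Qed.


Lemma e_dist x y : e x y -> dist y = (dist x).+1 \/ dist x = (dist y).+1.
Proof.
move=> exy; have h1 := dist_e exy; have h2 := dist_e (y := x) (x := y).
rewrite eS exy in h2; have {}h2 := h2 isT.
have [eq|ne] := eqVneq (dist x) (dist y).
  exfalso; apply: (@nocyc x y [::]) => //=; last by rewrite eS exy.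
  by apply/negP => /eqP xy; subst y; rewrite eirr in exy.
by lia.
Qed.

Lemma par_uniq x y : e x y -> dist y = (dist x).+1 -> x = par y.
Proof.
move=> exy dy; have ym : y != m by rewrite -dist_pos dy.
have [h1 h2] := par_spec ym.
apply/eqP; apply/negP => /negP ne.
apply: (@nocyc x (par y) [:: y]) => //=; first lia.
- by rewrite andbT dy.
- by rewrite h1 eS exy.
Qed.

Definition child x y := (y != m) && (par y == x).

Lemma e_child x y : e x y = child x y || child y x.
Proof.
apply/idP/idP.
  move=> exy; case: (e_dist exy) => h.
    by rewrite /child -(par_uniq exy h) eqxx -dist_pos h.
  rewrite eS in exy.
  by rewrite /child -(par_uniq exy h) eqxx -(dist_pos x) h orbT.
by case/orP => /andP [ym /eqP <-]; [rewrite e_par' | rewrite e_par].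
Qed.

Lemma par_neq y : y != m -> par y != y.
Proof.
move=> ym; apply/eqP => h; have := dist_par y; rewrite h.
by have := ym; rewrite -dist_pos; lia.
Qed.

Definition pe (v : T) : dual_vertex e := insub [set v; par v].

Lemma pe_m : pe m = None.
Proof.
rewrite /pe; case: insubP => // E /existsP [x /existsP [y /andP [exy /eqP H]]] _.
rewrite par_m in H.
have : x \in [set m; m] by rewrite H set21.
have : y \in [set m; m] by rewrite H set22.
rewrite !in_set2 !orbb => /eqP hy /eqP hx; subst.
by rewrite eirr in exy.
Qed.

Lemma pe_some v : v != m -> exists2 E, pe v = Some E & val E = [set v; par v].
Proof.
move=> vm; rewrite /pe; case: insubP => [E _ vE | /negP []]; first by exists E.
by apply/existsP; exists v; apply/existsP; exists (par v); rewrite e_par // eqxx.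
Qed.

Lemma pe_None v : (pe v == None) = (v == m).
Proof.
case: (eqVneq v m) => [->|vm]; first by rewrite pe_m.
by have [E -> _] := pe_some vm.
Qed.

Lemma pe_inj : injective pe.
Proof.
move=> u v.
case: (eqVneq u m) => [->|um].
  by rewrite pe_m => /esym/eqP; rewrite pe_None => /eqP.
case: (eqVneq v m) => [->|vm].
  by rewrite pe_m => /eqP; rewrite pe_None (negbTE um).
have [E -> Eu] := pe_some um; have [F -> Fv] := pe_some vm.
case => EF; subst F; move: Fv; rewrite Eu => H.
have : u \in [set v; par v] by rewrite -H set21.
have : v \in [set u; par u] by rewrite H set21.
rewrite !in_set2 => /orP [/eqP -> //|/eqP h1] /orP [/eqP -> //|/eqP h2].
have := dist_par u; have := dist_par v; rewrite -h1 -h2.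
have := um; have := vm; rewrite -!dist_pos; lia.
Qed.

Lemma pe_surj a : exists v, pe v = a.
Proof.
case: a => [E|]; last by exists m; rewrite pe_m.
have := valP E => /existsP [x /existsP [y /andP [exy /eqP H]]].
move: exy; rewrite e_child => /orP [] /andP [ym /eqP px].
  have [F hF Fv] := pe_some ym; exists y; rewrite hF; congr Some; apply: val_inj.
  by rewrite Fv H px setUC.
have [F hF Fv] := pe_some ym; exists x; rewrite hF; congr Some; apply: val_inj.
by rewrite Fv H px.
Qed.

Definition lowo (a : dual_vertex e) : T := odflt m [pick v | pe v == a].

Lemma lowoK a : pe (lowo a) = a.
Proof.
rewrite /lowo; case: pickP => [v /eqP //|H].
by have [v hv] := pe_surj a; move: (H v); rewrite hv eqxx.
Qed.

Lemma peK v : lowo (pe v) = v.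
Proof. by apply: pe_inj; rewrite lowoK. Qed.

Notation mu := (dual_mult e m).

Lemma mult_par y : y != m -> mu (pe (par y)) (pe y) != 0.
Proof.
move=> ym; have [E hE Ev] := pe_some ym; rewrite hE.
case: (eqVneq (par y) m) => [pm|pm].
  by rewrite pm pe_m /= Ev -pm set22.
have [F hF Fv] := pe_some pm; rewrite hF /=.
case: ifP => //; move/negP; case; apply/andP; split.
  apply/negP => /eqP FE; subst F.
  have : y \in [set par y; par (par y)] by rewrite -Fv Ev set21.
  rewrite in_set2 => /orP [/eqP h|/eqP h].
    by move: (par_neq ym); rewrite -h eqxx.
  have := dist_par y; have := dist_par (par y); rewrite -h.
  by have := ym; rewrite -dist_pos; lia.
by apply/existsP; exists (par y); rewrite Fv Ev set21 set22.
Qed.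

Lemma mult_dist x y : mu (pe x) (pe y) != 0 -> dist y <= (dist x).+1.
Proof.
case: (eqVneq y m) => [->|ym]; first by rewrite dist_m.
have [F hF Fv] := pe_some ym; rewrite hF.
have dy := dist_par y; have := ym; rewrite -dist_pos => yp.
case: (eqVneq x m) => [->|xm].
  rewrite pe_m /= Fv in_set2 (eq_sym m y) (negbTE ym) /=.
  by case: ifP => // /eqP pm _; move: dy; rewrite -pm dist_m; lia.
have [E hE Ev] := pe_some xm; rewrite hE /=.
case: ifP => // /andP [_ /existsP [w /andP [wE wF]]] _.
have dx := dist_par x.
move: wE wF; rewrite Ev Fv !in_set2.
by case/orP => /eqP -> /orP [] /eqP h; move: dx dy; rewrite ?h; lia.
Qed.

Lemma child_mult x y :
  child x y = (mu (pe x) (pe y) != 0) && (dist y == (dist x).+1).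
Proof.
apply/idP/idP.
  case/andP => ym /eqP <-; rewrite mult_par //=.
  by rewrite dist_par; move: ym; rewrite -dist_pos; lia.
case/andP => hmu /eqP dy.
have ym : y != m by rewrite -dist_pos dy.
rewrite /child ym /=.
have [F hF Fv] := pe_some ym; move: hmu; rewrite hF.
have dpy := dist_par y.
case: (eqVneq x m) => [->|xm].
  rewrite pe_m /= Fv in_set2 (eq_sym m y) (negbTE ym) /= (eq_sym m (par y)).
  by case: ifP.
have [E hE Ev] := pe_some xm; rewrite hE /=.
case: ifP => // /andP [_ /existsP [w /andP [wE wF]]] _.
have dpx := dist_par x; have := xm; rewrite -dist_pos => xp.
move: wE wF; rewrite Ev Fv !in_set2.
case/orP => /eqP -> /orP [] /eqP h.
- by move: dy; rewrite h; lia.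
- by rewrite h.
- by move: dpx dy; rewrite h; lia.
- by move: dpx dpy dy; rewrite h; lia.
Qed.


Lemma layer_dist k v : layer mu None k (pe v) = (dist v <= k).
Proof.
elim: k v => [|k IH] v /=; first by rewrite pe_None -dist0 leqn0.
rewrite IH; apply/idP/idP.
  case/orP => [h|/existsP [b /andP [hb hmu]]]; first exact: leqW.
  have [u hu] := pe_surj b; subst b; rewrite IH in hb.
  by have := mult_dist hmu; lia.
rewrite leq_eqVlt ltnS; case/orP => [/eqP dv|->//]; apply/orP; right.
have vm : v != m by rewrite -dist_pos dv.
apply/existsP; exists (pe (par v)); rewrite mult_par // IH dist_par dv; lia.
Qed.

Lemma isolated (E : edge_of e) : isolatedP E ->
  exists z, [/\ z != m, e z m & forall w, w = m \/ w = z].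
Proof.
move=> iso; have [z hz] := pe_surj (Some E).
have zm : z != m by rewrite -pe_None hz.
have [E' hE' Ev] := pe_some zm; move: hE'; rewrite hz => -[?]; subst E'.
have pz : par z = m.
  apply/eqP/negP => /negP pm; have [F hF Fv] := pe_some pm.
  have FE : F != E.
    apply/eqP => FE; subst F; move: hF; rewrite -hz => /pe_inj h.
    by move: (par_neq zm); rewrite h eqxx.
  move: (iso F FE) => /negP; apply; apply/existsP; exists (par z).
  by rewrite Ev Fv set21 set22.
exists z; split => //; first by rewrite -pz e_par.
suff H k w : dist w <= k -> w = m \/ w = z by move=> w; exact: (H _ w (leqnn _)).
elim: k w => [|k IH] w.
  by rewrite leqn0 dist0 => /eqP; left.
move=> dw; case: (eqVneq w m) => [->|wm]; first by left.
right; have [F hF Fv] := pe_some wm.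
have hp : par w = m \/ par w = z by apply: IH; rewrite dist_par; lia.
case: (eqVneq F E) => [FE|FE].
  by subst F; apply: pe_inj; rewrite hF hz.
move: (iso F FE) => /negP []; apply/existsP; exists (par w).
rewrite Fv set22 andbT Ev pz.
by case: hp => ->; rewrite ?set21 ?set22.
Qed.

Definition Qrel x y := (mu (pe x) (pe y) != 0) && (dist y == (dist x).+1).

Lemma package : exists pe : T -> dual_vertex e, exists lowo : dual_vertex e -> T,
  exists dist : T -> nat,
  [/\ pe m = None, cancel pe lowo, cancel lowo pe,
   forall x y, e x y =
     ((mu (pe x) (pe y) != 0) && (dist y == (dist x).+1)) ||
     ((mu (pe y) (pe x) != 0) && (dist x == (dist y).+1)) &
   (forall k v, layer mu None k (pe v) = (dist v <= k)) /\
   (forall E : edge_of e, isolatedP E -> exists z, [/\ z != m, e z m & forall w, w = m \/ w = z])].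
Proof.
exists pe, lowo, dist; split.
- exact: pe_m.
- exact: peK.
- exact: lowoK.
- by move=> x y; rewrite e_child !child_mult.
- split; [exact: layer_dist | exact: isolated].
Qed.

End Tree.


Theorem lemma5 (n : nat) (T1 T2 : finType) (e1 : rel T1) (m1 : T1)
    (e2 : rel T2) (m2 : T2) :
  #|T1| = n -> #|T2| = n ->
  is_tree e1 -> is_tree e2 ->
  dual_iso e1 m1 e2 m2 ->
  marked_iso e1 m1 e2 m2.
Proof.
move=> _ _ [s1 i1 c1 a1] [s2 i2 c2 a2] [f [fbij fmu]].
have [pe1 [lo1 [d1 [p1m k1 k1' e1Q [l1 iso1]]]]] := package m1 s1 i1 c1 a1.
have [pe2 [lo2 [d2 [p2m k2 k2' e2Q [l2 iso2]]]]] := package m2 s2 i2 c2 a2.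
have finj := bij_inj fbij.
have [f' fK f'K] := fbij.
case Hf: (f None) => [E2|].
- (* degenerate case: both trees are K2 *)
  case Hg: (f' None) => [E1|]; last by move: (f'K None); rewrite Hg Hf.
  have fE1 : f (Some E1) = None by rewrite -Hg f'K.
  have [z1 [z1m ez1 all1]] : exists z, [/\ z != m1, e1 z m1 & forall w, w = m1 \/ w = z].
    apply: (iso1 E1) => F FE; apply/negP => hex.
    have := fmu (Some E1) (Some F); rewrite fE1 /=.
    case Hb: (f (Some F)) => [G|]; last first.
      by have := finj _ _ (etrans Hb (esym fE1)) => -[h]; rewrite h eqxx in FE.
    rewrite hex eq_sym FE /=; by case: ifP.
  have [z2 [z2m ez2 all2]] : exists z, [/\ z != m2, e2 z m2 & forall w, w = m2 \/ w = z].
    apply: (iso2 E2) => F FE; apply/negP => hex.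
    case Hb: (f' (Some F)) => [G|].
      have := fmu None (f' (Some F)); rewrite Hf f'K Hb /= hex eq_sym FE /=; by case: ifP.
    by move: (f'K (Some F)); rewrite Hb Hf => -[] FE'; rewrite FE' eqxx in FE.
  exists (fun x => if x == m1 then m2 else z2); split; last by rewrite eqxx.
  + exists (fun y => if y == m2 then m1 else z1).
      move=> x; case: (all1 x) => ->; first by rewrite !eqxx.
      by rewrite (negbTE z1m) (negbTE z2m).
    move=> y; case: (all2 y) => ->; first by rewrite !eqxx.
    by rewrite (negbTE z2m) (negbTE z1m).
  + move=> x y; case: (all1 x) => ->; case: (all1 y) => ->;
      rewrite ?eqxx ?(negbTE z1m) ?i1 ?i2 //.
      by rewrite s1 s2 ez1 ez2.
    by rewrite ez1 ez2.
-
  have dd x : d2 (lo2 (f (pe1 x))) = d1 x.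
    apply: le_all_eq => k; rewrite -l1 -l2 k2'.
    by apply: (layer_iso fbij fmu Hf).
  exists (fun x => lo2 (f (pe1 x))); split.
  + exists (fun y => lo1 (f' (pe2 y))) => x.
      by rewrite k2' fK k1.
    by rewrite k1' f'K k2.
  + by move=> x y; rewrite e2Q e1Q !k2' !fmu !dd.
  + by rewrite p1m Hf -p2m k2.
Qed.
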